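(* Let $F=\{f_i\}_{i=1}^N$ be a frame for $\mathcal H$. If $(F,S_F^{-1}F)\in\mathcal N^{(1)}$, then $\{S_F^{-1/2}f_i\}_{i=1}^N$ is an equal norm Parseval frame. In addition, if $G$ is any dual of $F$ with $(F,G)\in\mathcal N^{(1)}$, then $G=S_F^{-1}F$.
   Context: $\mathcal H$ is a complex Hilbert space of finite dimension $n$, inner product linear in the first argument, $N\ge n$. A finite sequence $F=\{f_i\}_{i=1}^N$ is a frame if there are $0<A\le B$ with $A\|f\|^2\le\sum_i|\langle f,f_i\rangle|^2\le B\|f\|^2$ for all $f$; Parseval if $\sum_i|\langle f,f_i\rangle|^2=\|f\|^2$ for all $f$; equal norm if $\|f_i\|$ is constant. $S_Ff=\sum_i\langle f,f_i\rangle f_i$ is the (positive invertible) frame operator, $S_F^{-1/2}$ its inverse positive square root, $S_F^{-1}F=\{S_F^{-1}f_i\}$ the canonical dual. $G=\{g_i\}_{i=1}^N$ is a dual of $F$ if $f=\sum_i\langle f,g_i\rangle f_i$ for all $f$; $(F,G)$ is then an $(N,n)$ dual pair. $E_{\Lambda,F,G}f=\sum_{i\in\Lambda}\langle f,f_i\rangle g_i$. The numerical radius is $\omega(T)=\sup\{|\langle Tf,f\rangle|:\|f\|=1\}$; $\eta^{(1)}_{F,G}=\max_{1\le i\le N}\omega(E_{\{i\},F,G})$; $\eta^{(1)}=\inf\{\eta^{(1)}_{F,G}:(F,G)\text{ an }(N,n)\text{ dual pair}\}$; $\mathcal N^{(1)}=\{(F,G):\eta^{(1)}_{F,G}=\eta^{(1)}\}$.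 *)

(* Defs.v *)
(* complex Hilbert space H = C^n with C := R[i], R : realType. *)
From HB Require Import structures.
From mathcomp Require Import all_boot all_order all_algebra.
From mathcomp Require Import complex.
From mathcomp Require Import boolp classical_sets reals.
Set Implicit Arguments. Unset Strict Implicit. Unset Printing Implicit Defensive.
Import Order.TTheory GRing.Theory Num.Theory.
Local Open Scope ring_scope.

Section FrameDefs.
Variable R : realType.
Local Notation C := (R[i]).

(* inner product on C^n, linear in the first argument *)
Definition ip (n : nat) (x y : 'cV[C]_n) : C :=
  \sum_(k < n) x k 0 * conjc (y k 0).

Definition vnorm (n : nat) (x : 'cV[C]_n) : R := Num.sqrt (complex.Re (ip x x)).

(* modulus |z| of a complex number, as a real number (real part of the
   library's norm `|z| : C, which is real) *)
Definition cabs (z : C) : R := complex.Re `|z|.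

Definition absip (n : nat) (x y : 'cV[C]_n) : R := cabs (ip x y).

Definition is_frame (n N : nat) (F : 'I_N -> 'cV[C]_n) : Prop :=
  exists A B : R, 0 < A /\ A <= B /\
    forall f : 'cV[C]_n,
      A * vnorm f ^+ 2 <= \sum_(i < N) absip f (F i) ^+ 2 /\
      \sum_(i < N) absip f (F i) ^+ 2 <= B * vnorm f ^+ 2.

Definition is_parseval (n N : nat) (F : 'I_N -> 'cV[C]_n) : Prop :=
  forall f : 'cV[C]_n, \sum_(i < N) absip f (F i) ^+ 2 = vnorm f ^+ 2.

Definition equal_norm (n N : nat) (F : 'I_N -> 'cV[C]_n) : Prop :=
  forall i j : 'I_N, vnorm (F i) = vnorm (F j).

(* rank-one operator  f |-> <f,u> v  as a matrix: v u^*  *)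
Definition rank1 (n : nat) (u v : 'cV[C]_n) : 'M[C]_n :=
  \matrix_(k < n, l < n) (v k 0 * conjc (u l 0)).

Definition frame_op (n N : nat) (F : 'I_N -> 'cV[C]_n) : 'M[C]_n :=
  \sum_(i < N) rank1 (F i) (F i).

Definition canon_dual (n N : nat) (F : 'I_N -> 'cV[C]_n) : 'I_N -> 'cV[C]_n :=
  fun i => invmx (frame_op F) *m F i.

Definition is_dual (n N : nat) (F G : 'I_N -> 'cV[C]_n) : Prop :=
  forall f : 'cV[C]_n, f = \sum_(i < N) ip f (G i) *: F i.

Definition dual_pair (n N : nat) (F G : 'I_N -> 'cV[C]_n) : Prop :=
  is_frame F /\ is_dual F G.

(* positive operator: <Pf,f> >= 0 for all f (order of C: real and nonneg) *)
Definition pos_op (n : nat) (P : 'M[C]_n) : Prop :=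
  forall f : 'cV[C]_n, 0 <= ip (P *m f) f.

Definition numrad (n : nat) (T : 'M[C]_n) : R :=
  sup [set cabs (ip (T *m f) f) | f in [set f : 'cV[C]_n | vnorm f = 1]].

Definition E1 (n N : nat) (F G : 'I_N -> 'cV[C]_n) (i : 'I_N) : 'M[C]_n :=
  rank1 (F i) (G i).

Definition eta1FG (n N : nat) (F G : 'I_N -> 'cV[C]_n) : R :=
  \big[Num.max/0]_(i < N) numrad (E1 F G i).

Definition eta1 (n N : nat) : R :=
  inf [set eta1FG FG.1 FG.2 |
       FG in [set FG : ('I_N -> 'cV[C]_n) * ('I_N -> 'cV[C]_n) | dual_pair FG.1 FG.2]].

Definition inN1 (n N : nat) (F G : 'I_N -> 'cV[C]_n) : Prop :=
  dual_pair F G /\ eta1FG F G = eta1 n N.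

End FrameDefs.

(* Main.v *)
Require Import Defs.
From HB Require Import structures.
From mathcomp Require Import all_boot all_order all_algebra all_field.
From mathcomp Require cyclic.
From mathcomp Require Import complex.
From mathcomp Require Import boolp classical_sets reals.
From mathcomp Require Import ring lra.
Set Implicit Arguments. Unset Strict Implicit. Unset Printing Implicit Defensive.
Import Order.TTheory GRing.Theory Num.Theory.
Local Open Scope classical_set_scope.
Local Open Scope complex_scope.
Local Open Scope ring_scope.

Section S.
Variable R : realType.
Local Notation C := (R[i]).

Definition adj m n (A : 'M[C]_(m, n)) : 'M[C]_(n, m) := map_mx conjc A^T.

Lemma adjK m n (A : 'M[C]_(m, n)) : adj (adj A) = A.
Proof. by apply/matrixP => i j; rewrite !mxE conjcK. Qed.

Lemma adjM m n p (A : 'M[C]_(m, n)) (B : 'M[C]_(n, p)) : adj (A *m B) = adj B *m adj A.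
Proof. by rewrite /adj trmx_mul (map_mxM (conjc : {rmorphism C -> C})). Qed.

Lemma ipE n (x y : 'cV[C]_n) : ip x y = (adj y *m x) 0 0.
Proof. by rewrite /ip mxE; apply: eq_bigr => k _; rewrite !mxE mulrC. Qed.

Lemma ip_mul n (A : 'M[C]_n) x y : ip (A *m x) y = ip x (adj A *m y).
Proof. by rewrite !ipE adjM adjK mulmxA. Qed.

Lemma ipC n (x y : 'cV[C]_n) : ip y x = conjc (ip x y).
Proof. rewrite /ip rmorph_sum; apply: eq_bigr => k _. by rewrite rmorphM /= conjcK mulrC. Qed.

Lemma ipDl n (x y z : 'cV[C]_n) : ip (x + y) z = ip x z + ip y z.
Proof. rewrite /ip -big_split; apply: eq_bigr => k _; by rewrite !mxE mulrDl. Qed.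
Lemma ipZl n a (x z : 'cV[C]_n) : ip (a *: x) z = a * ip x z.
Proof. rewrite /ip mulr_sumr; apply: eq_bigr => k _; by rewrite !mxE mulrA. Qed.
Lemma ipNl n (x z : 'cV[C]_n) : ip (- x) z = - ip x z.
Proof. by rewrite -scaleN1r ipZl mulN1r. Qed.
Lemma ip0l n (z : 'cV[C]_n) : ip 0 z = 0.
Proof. by rewrite -(scale0r 0) ipZl mul0r. Qed.
Lemma ip_suml n I (r : seq I) (P : pred I) (f : I -> 'cV[C]_n) z :
  ip (\sum_(i <- r | P i) f i) z = \sum_(i <- r | P i) ip (f i) z.
Proof. exact: (big_morph (fun x => ip x z) (fun x y => ipDl x y z) (ip0l z)). Qed.
Lemma ipDr n (x y z : 'cV[C]_n) : ip z (x + y) = ip z x + ip z y.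
Proof. by rewrite ipC ipDl rmorphD /= -!ipC. Qed.
Lemma ipZr n a (x z : 'cV[C]_n) : ip z (a *: x) = conjc a * ip z x.
Proof. by rewrite ipC ipZl rmorphM /= -ipC. Qed.
Lemma ipNr n (x z : 'cV[C]_n) : ip z (- x) = - ip z x.
Proof. by rewrite ipC ipNl rmorphN /= -ipC. Qed.

Lemma ip_ge0 n (x : 'cV[C]_n) : 0 <= ip x x.
Proof. by apply: sumr_ge0 => k _; apply: mulcJ_ge0. Qed.

Lemma ip_eq0 n (x : 'cV[C]_n) : ip x x = 0 -> x = 0.
Proof.
move=> /eqP; rewrite psumr_eq0 /=; last by move=> k _; apply: mulcJ_ge0.
move=> /allP H; apply/matrixP => k j; rewrite (ord1 j) mxE.
have := H k (mem_index_enum _); rewrite /= mulf_eq0 conjc_eq0 orbb.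
by move/eqP.
Qed.


Definition nrm2 n (x : 'cV[C]_n) : R := complex.Re (ip x x).

Lemma realC_ge0 (z : C) : 0 <= z -> z = (complex.Re z)%:C.
Proof. by case: z => a b; rewrite lecE /= => /andP[/eqP -> _]. Qed.

Lemma ipxx n (x : 'cV[C]_n) : ip x x = (nrm2 x)%:C.
Proof. exact/realC_ge0/ip_ge0. Qed.

Lemma nrm2_ge0 n (x : 'cV[C]_n) : 0 <= nrm2 x.
Proof. by rewrite -lecR -ipxx ip_ge0. Qed.

Lemma nrm2_eq0 n (x : 'cV[C]_n) : nrm2 x = 0 -> x = 0.
Proof. by move=> h; apply: ip_eq0; rewrite ipxx h. Qed.

Lemma nrm2_gt0 n (x : 'cV[C]_n) : x != 0 -> 0 < nrm2 x.
Proof.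
move=> hx; rewrite lt_def nrm2_ge0 andbT; apply/eqP => /nrm2_eq0 h.
by rewrite h eqxx in hx.
Qed.

Lemma vnorm_sq n (x : 'cV[C]_n) : vnorm x ^+ 2 = nrm2 x.
Proof. by rewrite /vnorm sqr_sqrtr // nrm2_ge0. Qed.

Lemma vnorm_ge0 n (x : 'cV[C]_n) : 0 <= vnorm x.
Proof. exact: sqrtr_ge0. Qed.

Lemma cabsE (z : C) : cabs z = Num.sqrt (complex.Re z ^+ 2 + complex.Im z ^+ 2).
Proof. by case: z => a b; rewrite /cabs /=. Qed.

Lemma cabs_ge0 (z : C) : 0 <= cabs z.
Proof. by rewrite cabsE sqrtr_ge0. Qed.

Lemma cabs_sq (z : C) : cabs z ^+ 2 = complex.Re (z * conjc z).
Proof. rewrite cabsE sqr_sqrtr; last by rewrite addr_ge0 ?sqr_ge0.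
by case: z => a b /=; rewrite !expr2; ring. Qed.

Lemma cabsM (z w : C) : cabs (z * w) = cabs z * cabs w.
Proof. by rewrite /cabs normrM !normc_def /= mulr0 subr0. Qed.

Lemma cabs_real (a : R) : cabs a%:C = `|a|.
Proof. by rewrite cabsE /= expr0n /= addr0 sqrtr_sqr. Qed.

Lemma Re_le_cabs (z : C) : complex.Re z <= cabs z.
Proof.
rewrite cabsE; case: z => a b /=.
apply: (le_trans (ler_norm a)); rewrite -sqrtr_sqr ler_sqrt ?addr_ge0 ?sqr_ge0 //.
by rewrite lerDl sqr_ge0.
Qed.

Lemma cabs_le_Re (z : C) : cabs z <= complex.Re z -> z = (complex.Re z)%:C.
Proof.
rewrite cabsE; case: z => a b /= h.
have a0 : 0 <= a by apply: le_trans h; apply: sqrtr_ge0.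
move: h; rewrite -{2}(ger0_norm a0) -sqrtr_sqr ler_sqrt ?sqr_ge0 // -{2}[a ^+ 2]addr0 lerD2l => hb.
have : b ^+ 2 == 0 by rewrite eq_le hb sqr_ge0.
by rewrite sqrf_eq0 => /eqP ->.
Qed.


Lemma mulcJ (z : C) : z * conjc z = (cabs z ^+ 2)%:C.
Proof. rewrite cabs_sq; case: z => a b /=; congr (_ +i* _); ring. Qed.

Lemma ip0r n (x : 'cV[C]_n) : ip x 0 = 0.
Proof. by rewrite ipC ip0l rmorph0. Qed.

Lemma rC_mul (a b : R) : (a * b)%:C = a%:C * b%:C :> C.
Proof. by rewrite rmorphM. Qed.
Lemma rC_add (a b : R) : (a + b)%:C = a%:C + b%:C :> C.
Proof. by rewrite rmorphD. Qed.
Lemma rC_sub (a b : R) : (a - b)%:C = a%:C - b%:C :> C.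
Proof. by rewrite rmorphB. Qed.
Lemma rC_exp (a : R) k : (a ^+ k)%:C = a%:C ^+ k :> C.
Proof. by rewrite rmorphXn. Qed.

Lemma CS n (x y : 'cV[C]_n) : cabs (ip x y) ^+ 2 <= nrm2 x * nrm2 y.
Proof.
have [->|y0] := eqVneq y 0.
  by rewrite ip0r cabs_real normr0 expr0n /= /nrm2 ip0r mulr0.
set a := ip y y; set b := ip x y.
pose z := a *: x - b *: y.
have ha : conjc a = a by rewrite /a ipxx conjc_real.
have e : ip z z = a * (a * ip x x - b * conjc b).
  rewrite /z !(ipDl, ipNl, ipZl, ipDr, ipNr, ipZr) ha (ipC x y) -/b -/a; ring.
have hy := nrm2_gt0 y0.
have : 0 <= nrm2 y * (nrm2 y * nrm2 x - cabs b ^+ 2).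
  rewrite -lecR rC_mul rC_sub rC_mul -!ipxx -mulcJ -/a -e; exact: ip_ge0.
by rewrite pmulr_rge0 // subr_ge0 mulrC.
Qed.

Lemma cabs_ip_le n (x y : 'cV[C]_n) : cabs (ip x y) <= vnorm x * vnorm y.
Proof.
rewrite -(ler_pXn2r (n := 2)) ?nnegrE ?cabs_ge0 ?mulr_ge0 ?vnorm_ge0 //.
by rewrite exprMn !vnorm_sq CS.
Qed.

Lemma rank1E n (u v : 'cV[C]_n) : rank1 u v = v *m adj u.
Proof. by apply/matrixP => k l; rewrite !mxE big_ord1 !mxE. Qed.

Lemma rank1_mul n (u v y : 'cV[C]_n) : rank1 u v *m y = ip y u *: v.
Proof. by rewrite rank1E -mulmxA (mx11_scalar (adj u *m y)) -ipE mul_mx_scalar. Qed.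

Lemma ip_rank1 n (u v y : 'cV[C]_n) : ip (rank1 u v *m y) y = ip y u * ip v y.
Proof. by rewrite rank1_mul ipZl. Qed.


Definition NS n (T : 'M[C]_n) := [set cabs (ip (T *m f) f) | f in [set f : 'cV[C]_n | vnorm f = 1]].

Lemma NS_ub n (u v : 'cV[C]_n) : has_ubound (NS (rank1 u v)).
Proof.
exists (vnorm u * vnorm v) => _ [f /= hf <-].
rewrite ip_rank1 cabsM; apply: ler_pM; rewrite ?cabs_ge0 //.
  by apply: le_trans (cabs_ip_le _ _) _; rewrite hf mul1r.
by apply: le_trans (cabs_ip_le _ _) _; rewrite hf mulr1.
Qed.

Lemma numrad_ub n (u v y : 'cV[C]_n) : vnorm y = 1 ->
  cabs (ip (rank1 u v *m y) y) <= numrad (rank1 u v).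
Proof. by move=> hy; apply: (ub_le_sup (NS_ub u v)); exists y. Qed.

Lemma normalize n (x : 'cV[C]_n) : x != 0 ->
  vnorm ((Num.sqrt (nrm2 x))^-1%:C *: x) = 1.
Proof.
move=> x0; have hx := nrm2_gt0 x0.
rewrite /vnorm ipZl ipZr conjc_real ipxx -!rC_mul /= mulrA.
by rewrite -expr2 exprVn sqr_sqrtr ?nrm2_ge0 // mulVf ?gt_eqF // sqrtr1.
Qed.

Lemma numrad_lower n (u v x : 'cV[C]_n) : x != 0 ->
  cabs (ip (rank1 u v *m x) x) <= numrad (rank1 u v) * nrm2 x.
Proof.
move=> x0; have hx := nrm2_gt0 x0.
have := numrad_ub u v (normalize x0).
set c := (Num.sqrt (nrm2 x))^-1.
rewrite -scalemxAr ipZl ipZr conjc_real mulrA -rC_mul cabsM cabs_real.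
rewrite ger0_norm ?mulr_ge0 ?invr_ge0 ?sqrtr_ge0 //.
rewrite -expr2 exprVn sqr_sqrtr ?nrm2_ge0 // => h.
by rewrite -ler_pdivrMr // mulrC.
Qed.

Lemma vec_nonzero n : (0 < n)%N -> exists x : 'cV[C]_n, x != 0.
Proof.
move=> n0; exists (const_mx 1); apply/eqP => /matrixP /(_ (Ordinal n0) 0).
by rewrite !mxE; apply/eqP; rewrite oner_eq0.
Qed.

Lemma numrad_le n (u v : 'cV[C]_n) (K : R) : (0 < n)%N ->
  (forall y, vnorm y = 1 -> cabs (ip (rank1 u v *m y) y) <= K) ->
  numrad (rank1 u v) <= K.
Proof.
move=> n0 hK; apply: ge_sup.
  have [x x0] := vec_nonzero n0.
  set y := (Num.sqrt (nrm2 x))^-1%:C *: x.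
  by exists (cabs (ip (rank1 u v *m y) y)), y; rewrite //= normalize.
by move=> _ [f /= hf <-]; apply: hK.
Qed.

Lemma eta_ge0 n N (F G : 'I_N -> 'cV[C]_n) : 0 <= eta1FG F G.
Proof. by rewrite /eta1FG; elim/big_rec: _ => // i x _ hx; rewrite le_max hx orbT. Qed.

Lemma numrad_le_eta n N (F G : 'I_N -> 'cV[C]_n) i : numrad (E1 F G i) <= eta1FG F G.
Proof. by rewrite /eta1FG (bigD1 i) //= le_max lexx. Qed.

Lemma eta_le n N (F G : 'I_N -> 'cV[C]_n) K : 0 <= K ->
  (forall i, numrad (E1 F G i) <= K) -> eta1FG F G <= K.
Proof. by move=> K0 h; rewrite /eta1FG; elim/big_ind: _ => //= x y hx hy; rewrite ge_max hx. Qed.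


Lemma mx_eq1 n (M : 'M[C]_n) : (forall f : 'cV[C]_n, M *m f = f) -> M = 1%:M.
Proof.
move=> h; apply/matrixP => i j.
have := congr1 (fun A : 'cV[C]_n => A i 0) (h (delta_mx j 0)).
by rewrite -colE !mxE eqxx andbT /= => ->.
Qed.

Lemma ipZ_mul n (f u v : 'cV[C]_n) : ip f u *: v = v *m adj u *m f.
Proof. by rewrite -mulmxA (mx11_scalar (adj u *m f)) -ipE mul_mx_scalar. Qed.

Lemma dual_sum n N (F G : 'I_N -> 'cV[C]_n) f :
  \sum_(i < N) ip f (G i) *: F i = (\sum_(i < N) F i *m adj (G i)) *m f.
Proof. by rewrite mulmx_suml; apply: eq_bigr => i _; rewrite ipZ_mul. Qed.

Lemma dual_mx n N (F G : 'I_N -> 'cV[C]_n) :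
  is_dual F G -> \sum_(i < N) F i *m adj (G i) = 1%:M.
Proof. by move=> h; apply: mx_eq1 => f; rewrite -dual_sum -h. Qed.

Lemma mx_dual n N (F G : 'I_N -> 'cV[C]_n) :
  \sum_(i < N) F i *m adj (G i) = 1%:M -> is_dual F G.
Proof. by move=> h f; rewrite dual_sum h mul1mx. Qed.

Lemma frame_opE n N (F : 'I_N -> 'cV[C]_n) :
  frame_op F = \sum_(i < N) F i *m adj (F i).
Proof. by apply: eq_bigr => i _; rewrite rank1E. Qed.

Lemma ReD (z w : C) : complex.Re (z + w) = complex.Re z + complex.Re w.
Proof. by case: z; case: w. Qed.

Lemma Re_sum I (r : seq I) (P : pred I) (f : I -> C) :
  complex.Re (\sum_(i <- r | P i) f i) = \sum_(i <- r | P i) complex.Re (f i).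
Proof. exact: (big_morph _ ReD). Qed.

Lemma parseval_sum n N (F : 'I_N -> 'cV[C]_n) y :
  \sum_(i < N) absip y (F i) ^+ 2 = complex.Re (ip (frame_op F *m y) y).
Proof.
rewrite frame_opE -dual_sum ip_suml Re_sum; apply: eq_bigr => i _.
by rewrite /absip cabs_sq ipZl (ipC y).
Qed.

Lemma trace_dual n N (F G : 'I_N -> 'cV[C]_n) :
  is_dual F G -> \sum_(i < N) ip (G i) (F i) = n%:R.
Proof.
move=> /dual_mx h.
have : \sum_(i < N) ip (F i) (G i) = n%:R.
  rewrite -mxtrace1 -h raddf_sum /=; apply: eq_bigr => i _.
  by rewrite mxtrace_mulC /mxtrace big_ord1 ipE.
move=> /(congr1 conjc); rewrite rmorph_sum conjc_nat => <-.
by apply: eq_bigr => i _; rewrite /= (ipC (F i)).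
Qed.

Lemma frame_unit n N (F : 'I_N -> 'cV[C]_n) :
  is_dual F (canon_dual F) -> frame_op F \in unitmx.
Proof.
move=> /dual_mx h.
suff : frame_op F *m adj (invmx (frame_op F)) = 1%:M by case/mulmx1_unit.
rewrite frame_opE mulmx_suml -h; apply: eq_bigr => i _.
by rewrite /canon_dual adjM mulmxA frame_opE.
Qed.


Lemma cs_eq n (f g : 'cV[C]_n) (K : R) : 0 < K -> ip g f = K%:C ->
  (forall x, x != 0 -> cabs (ip (rank1 f g *m x) x) <= K * nrm2 x) ->
  g = (K / nrm2 f)%:C *: f.
Proof.
move=> K0 eGF hT.
have eFG : ip f g = K%:C by rewrite ipC eGF conjc_real.
have f0 : f != 0 by apply/eqP => f0; move: eGF; rewrite f0 ip0r => /complexI K00; rewrite -K00 ltxx in K0.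
have g0 : g != 0 by apply/eqP => g0; move: eGF; rewrite g0 ip0l => /complexI K00; rewrite -K00 ltxx in K0.
set a := vnorm f; set b := vnorm g.
have a0 : 0 < a by rewrite /a /vnorm sqrtr_gt0 nrm2_gt0.
have b0 : 0 < b by rewrite /b /vnorm sqrtr_gt0 nrm2_gt0.
have eF : ip f f = (a ^+ 2)%:C by rewrite /a vnorm_sq ipxx.
have eG : ip g g = (b ^+ 2)%:C by rewrite /b vnorm_sq ipxx.
pose x := b%:C *: f + a%:C *: g.
have exx : ip x x = (2%:R * a * b * (a * b + K))%:C.
  rewrite /x !(ipDl, ipZl, ipDr, ipZr) !conjc_real ?eF ?eG ?eGF ?eFG.
  by rewrite !(rC_add, rC_mul, rC_exp) /= rmorph1; ring.
have eT : ip (rank1 f g *m x) x = (a * b * (a * b + K) ^+ 2)%:C.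
  rewrite ip_rank1 /x !(ipDl, ipZl, ipDr, ipZr) !conjc_real ?eF ?eG ?eGF ?eFG.
  by rewrite !(rC_add, rC_mul, rC_exp) /=; ring.
have ab0 : 0 < a * b := mulr_gt0 a0 b0.
have pab : 0 < a * b * (a * b + K) := mulr_gt0 ab0 (addr_gt0 ab0 K0).
have nx : nrm2 x = 2%:R * a * b * (a * b + K) by rewrite /nrm2 exx.
have x0 : x != 0.
  apply/eqP => x0; have : nrm2 x = 0 by rewrite x0 /nrm2 ip0r.
  rewrite nx => h; have : 0 < 2%:R * (a * b * (a * b + K)) by rewrite mulr_gt0.
  rewrite !mulrA.
  by rewrite h ltxx.
have hab : a * b <= K.
  have := hT x x0; rewrite eT cabs_real ger0_norm; last first.
    by rewrite mulr_ge0 ?exprn_ge0 ?ltW // addr_gt0.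
  rewrite nx.
  have -> : a * b * (a * b + K) ^+ 2 = (a * b * (a * b + K)) * (a * b + K) by rewrite expr2 mulrA.
  have -> : K * (2%:R * a * b * (a * b + K)) = (a * b * (a * b + K)) * (2%:R * K) by ring.
  by rewrite ler_pM2l // => h; lra.
set c := K / nrm2 f.
have hfa : nrm2 f = a ^+ 2 by rewrite /a vnorm_sq.
pose z := g - c%:C *: f.
have ezz : nrm2 z = b ^+ 2 - K ^+ 2 / a ^+ 2.
  have : ip z z = (b ^+ 2 - K ^+ 2 / a ^+ 2)%:C.
    rewrite /z !(ipDl, ipNl, ipZl, ipDr, ipNr, ipZr) !conjc_real ?eF ?eG ?eGF ?eFG /c hfa.
    have ac0 : a%:C != 0 :> C by apply/eqP => /complexI a00; rewrite a00 ltxx in a0.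
    rewrite !(rC_add, rC_sub, rC_mul, rC_exp) /= ?fmorphV ?rmorphN /= ?rC_exp ?rC_mul.
    by field.
  by rewrite /nrm2 => ->.
have : nrm2 z <= 0.
  rewrite ezz subr_le0 ler_pdivlMr ?exprn_gt0 // -exprMn mulrC.
  by rewrite lerXn2r // nnegrE ltW // mulr_gt0.
move=> hz; have /nrm2_eq0 /eqP : nrm2 z = 0 by apply/eqP; rewrite eq_le hz nrm2_ge0.
by rewrite subr_eq0 => /eqP.
Qed.


Lemma key n N (F G : 'I_N -> 'cV[C]_n) : (0 < n)%N -> (n <= N)%N -> is_dual F G ->
  eta1FG F G <= n%:R / N%:R ->
  forall i, ip (G i) (F i) = (n%:R / N%:R)%:C /\
            G i = ((n%:R / N%:R) / nrm2 (F i))%:C *: F i.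
Proof.
move=> n0 nN hd heta.
have N0 : (0 < N)%N by apply: leq_trans nN.
set K := n%:R / N%:R.
have K0 : 0 < K by rewrite divr_gt0 ?ltr0n.
have hw : forall i, numrad (E1 F G i) <= K by move=> i; apply: le_trans (numrad_le_eta _ _ i) heta.
have hr : forall i, cabs (ip (G i) (F i)) <= K.
  move=> i; have [G0|G0] := eqVneq (G i) 0.
    by rewrite G0 ip0l cabs_real normr0 ltW.
  have := numrad_lower (F i) (G i) G0.
  rewrite rank1_mul ipZl ipxx cabsM cabs_real ger0_norm ?nrm2_ge0 // => h.
  rewrite -(ler_pM2r (nrm2_gt0 G0)); apply: le_trans h _.
  by rewrite ler_pM2r ?nrm2_gt0 // hw.
have hsum : \sum_(i < N) complex.Re (ip (G i) (F i)) = n%:R.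
  by rewrite -Re_sum trace_dual // -(rmorph_nat (real_complex R)).
have hRe : forall i, complex.Re (ip (G i) (F i)) = K.
  have h0 : \sum_(i < N) (K - complex.Re (ip (G i) (F i))) = 0.
    rewrite sumrB hsum sumr_const card_ord -(mulr_natr K N) /K divfK ?subrr //.
    by rewrite pnatr_eq0 -lt0n.
  move=> i; apply/eqP; rewrite eq_sym -subr_eq0; apply/eqP.
  apply: (psumr_eq0P _ h0) => // j _.
  by rewrite subr_ge0; apply: le_trans (Re_le_cabs _) (hr j).
have hr2 : forall i, ip (G i) (F i) = K%:C.
  by move=> i; rewrite -(hRe i); apply: cabs_le_Re; rewrite hRe.
move=> i; split; first exact: hr2.
apply: cs_eq => // x x0; apply: le_trans (numrad_lower _ _ x0) _.
by rewrite ler_pM2r ?nrm2_gt0 // hw.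
Qed.


Lemma prim_root_ex N : (0 < N)%N -> exists z : C, N.-primitive_root z.
Proof.
move=> n_gt0.
pose p : {poly C} := 'X^N - 1; have [r Dp] := closed_field_poly_normal p.
rewrite (monicP _) ?monicXnsubC // scale1r in Dp.
have rn1: all N.-unity_root r by apply/allP=> z; rewrite -root_prod_XsubC -Dp.
have sz_r: (N < (size r).+1)%N.
  by rewrite -(size_prod_XsubC r id) -Dp size_XnsubC.
have [|z] := hasP (cyclic.has_prim_root n_gt0 rn1 _ sz_r); last by exists z.
by rewrite -separable_prod_XsubC -Dp separable_Xn_sub_1 // pnatr_eq0 -lt0n.
Qed.

Lemma unit_mod (z : C) N : (0 < N)%N -> z ^+ N = 1 -> z * conjc z = 1.
Proof.
move=> N0 hz.
have h1 : `|z| = 1.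
  by apply/eqP; rewrite -(pexpr_eq1 N0) // -normrX hz normr1.
by rewrite -sqr_normc h1 expr1n.
Qed.


Lemma conjcM (a b : C) : conjc (a * b) = conjc a * conjc b.
Proof. exact: rmorphM. Qed.
Lemma conjcX (a : C) m : conjc (a ^+ m) = conjc a ^+ m.
Proof. exact: rmorphXn. Qed.

Section Harm.
Variables (n N : nat) (z : C).
Hypotheses (nN : (n <= N)%N) (N0 : (0 < N)%N) (pz : N.-primitive_root z).
Let s : R := (Num.sqrt N%:R)^-1.
Definition harm (j : 'I_N) : 'cV[C]_n := \col_(k < n) (s%:C * z ^+ (j * k)).

Let zN : z ^+ N = 1.
Proof. exact: prim_expr_order. Qed.

Let zc m : z ^+ m * conjc (z ^+ m) = 1.
Proof. by rewrite conjcX -exprMn (unit_mod N0 zN) expr1n. Qed.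

Let s2 : s ^+ 2 * N%:R = 1.
Proof. by rewrite /s exprVn sqr_sqrtr ?ler0n // mulVf // pnatr_eq0 -lt0n. Qed.

Lemma harm_frame_op : frame_op harm = 1%:M.
Proof.
rewrite frame_opE; apply/matrixP => k l; rewrite summxE !mxE.
have e : forall j : 'I_N, (harm j *m adj (harm j)) k l =
    (s ^+ 2)%:C * (z ^+ k * conjc (z ^+ l)) ^+ j.
  move=> j; rewrite !mxE big_ord1 !mxE conjcM conjc_real.
  rewrite exprMn !(mulnC j) !exprM rC_exp !conjcX; ring.
rewrite (eq_bigr _ (fun j _ => e j)) -mulr_sumr.
have [kl|kl] := eqVneq k l.
  rewrite kl zc; under eq_bigr do rewrite expr1n.
  by rewrite sumr_const card_ord -mulr_natr mul1r -(rmorph_nat (real_complex R) N) -rC_mul s2 rmorph1.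
set w := z ^+ k * conjc (z ^+ l).
have wN : w ^+ N = 1.
  by rewrite /w exprMn -conjcX -!exprM !(mulnC _ N) !exprM zN !expr1n conjc1 mulr1.
have w1 : w != 1.
  apply/eqP => w1; move: kl; apply/negP; rewrite negbK.
  have : w * z ^+ l = z ^+ l by rewrite w1 mul1r.
  rewrite /w -mulrA (mulrC (conjc _)) zc mulr1 => /eqP.
  rewrite (eq_prim_root_expr pz) !modn_small //; apply: leq_trans nN => //.
have : (w - 1) * \sum_(i < N) w ^+ i = 0 by rewrite -subrX1 wN subrr.
move=> /eqP; rewrite mulf_eq0 subr_eq0 (negbTE w1) /= => /eqP ->.
by rewrite mulr0.
Qed.

Lemma harm_dual : dual_pair harm harm.
Proof.
split; last by apply: mx_dual; rewrite -frame_opE harm_frame_op.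
exists 1, 1; split; first exact: ltr01. split=> // f.
by rewrite parseval_sum harm_frame_op mul1mx vnorm_sq mul1r lexx.
Qed.

Lemma harm_nrm2 j : nrm2 (harm j) = n%:R / N%:R.
Proof.
rewrite /nrm2 /ip.
have e : forall k : 'I_n, harm j k 0 * conjc (harm j k 0) = (s ^+ 2)%:C.
  by move=> k; rewrite !mxE conjcM conjc_real mulrACA zc mulr1 -rC_mul expr2.
rewrite (eq_bigr _ (fun k _ => e k)) sumr_const card_ord -rmorphMn /= -mulr_natr.
have nz : N%:R != 0 :> R by rewrite pnatr_eq0 -lt0n.
rewrite mulrC; congr (_ * _); apply: (mulIf nz); by rewrite s2 mulVf.
Qed.

End Harm.


Lemma eta1_le n N : (0 < n)%N -> (n <= N)%N -> eta1 R n N <= n%:R / N%:R.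
Proof.
move=> n0 nN; have N0 : (0 < N)%N by apply: leq_trans nN.
have [z pz] := prim_root_ex N0.
have K0 : 0 <= n%:R / N%:R :> R by rewrite divr_ge0 ?ler0n.
apply: (@le_trans _ _ (eta1FG (harm n z) (harm n z))).
  apply: (ge_inf); first by exists 0 => _ [FG _ <-]; apply: eta_ge0.
  by exists (harm n z, harm n z) => //=; apply: harm_dual.
apply: eta_le => // j; apply: numrad_le => // y hy.
rewrite ip_rank1 (ipC y (harm n z j)) mulcJ cabs_real ger0_norm ?exprn_ge0 ?cabs_ge0 //.
rewrite -(harm_nrm2 n N0 pz j) -(mul1r (nrm2 _)) -(expr1n _ 2) -{1}hy vnorm_sq; exact: CS.
Qed.

Lemma ip_mulr n (A : 'M[C]_n) x y : ip x (A *m y) = ip (adj A *m x) y.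
Proof. by rewrite ipC ip_mul -ipC. Qed.

Lemma conj_i : conjc 'i%C = - 'i%C :> C.
Proof. by apply/eqP; rewrite eq_complex /= oppr0 !eqxx. Qed.

Lemma polar n (Q : 'M[C]_n) : (forall f : 'cV[C]_n, ip (Q *m f) f = 0) -> forall a : 'cV[C]_n, Q *m a = 0.
Proof.
move=> hq a.
have h1 : forall b, ip (Q *m a) b + ip (Q *m b) a = 0.
  move=> b; have := hq (a + b).
  by rewrite mulmxDr !(ipDl, ipDr) hq hq add0r addr0 addrC.
have X0 : ip (Q *m a) (Q *m a) = 0.
  set b := Q *m a.
  have e1 := h1 b; have := h1 ('i%C *: b).
  rewrite ipZr -scalemxAr ipZl conj_i => e2.
  have : ip (Q *m a) b *+ 2 = 0.
    set X := ip (Q *m a) b in e1 e2 *; set Y := ip (Q *m b) a in e1 e2 *.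
    have ii : 'i%C * 'i%C = -1 :> C by rewrite -expr2 sqr_i.
    have E : X *+ 2 = (X + Y) + 'i%C * (- 'i%C * X + 'i%C * Y) + ('i%C * 'i%C + 1) * (X - Y) by ring.
    by rewrite E e1 e2 ii addNr mulr0 mul0r !addr0.
  by move/eqP; rewrite mulrn_eq0 /= => /eqP.
exact: ip_eq0.
Qed.

End S.

Unset Implicit Arguments.

Theorem theorem5p3 (R : realType) (n N : nat) (F : 'I_N -> 'cV[R[i]]_n) :
  (n <= N)%N -> is_frame F ->
  inN1 F (canon_dual F) ->
  (forall P : 'M[R[i]]_n,
      pos_op P -> P *m P = invmx (frame_op F) ->
      equal_norm (fun i => P *m F i) /\ is_frame (fun i => P *m F i) /\
      is_parseval (fun i => P *m F i))
  /\
  (forall G : 'I_N -> 'cV[R[i]]_n, is_dual F G -> inN1 F G -> G = canon_dual F).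
Proof.
move=> nN hF [[_ hdc] heq].
have hS := frame_unit hdc.
set S := frame_op F in hS *.
have hkey : (0 < n)%N -> forall G, is_dual F G -> eta1FG F G = eta1 R n N ->
    forall i, ip (G i) (F i) = (n%:R / N%:R)%:C /\
            G i = ((n%:R / N%:R) / nrm2 (F i))%:C *: F i.
  move=> n0 G hG hGe; apply: key => //; rewrite hGe; exact: eta1_le.
split.
  move=> P hP hPP.
  have hadj : forall v : 'cV[R[i]]_n, adj P *m v = P *m v.
    move=> v; apply/eqP; rewrite -subr_eq0 -mulmxBl; apply/eqP.
    apply: polar => f; rewrite mulmxBl ipDl ipNl.
    have := hP f => /realC_ge0 e.
    by rewrite -(conjcK (ip (adj P *m f) f)) -ipC -ip_mul e conjc_real subrr.
  set Si := invmx S in hPP.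
  have e1 : P *m Si = Si *m P by rewrite -hPP mulmxA.
  have e2 : S *m P = P *m S.
    rewrite -[S *m P]mulmx1 -(mulVmx hS) !mulmxA -(mulmxA S P) e1 mulmxA.
    by rewrite (mulmxV hS) mul1mx.
  have e3 : P *m S *m P = 1%:M by rewrite -e2 -mulmxA hPP mulmxV.
  have hpar : is_parseval (fun i => P *m F i).
    move=> f; rewrite (eq_bigr (fun i => absip (P *m f) (F i) ^+ 2)); last first.
      by move=> i _; rewrite /absip ip_mulr hadj.
    by rewrite parseval_sum ip_mulr hadj !mulmxA e3 mul1mx vnorm_sq.
  split; last first.
    split => //; exists 1, 1; split; first exact: ltr01.
    by split => // f; rewrite hpar mul1r lexx.
  have [n0|n0] := posnP n.
    by move=> i j; move: (P *m F i) (P *m F j); rewrite n0 => x y; rewrite !flatmx0.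
  have hk := hkey n0 _ hdc heq.
  suff e : forall i, vnorm (P *m F i) = Num.sqrt (n%:R / N%:R) by move=> i j; rewrite !e.
  move=> i; rewrite /vnorm ip_mul hadj mulmxA hPP.
  have := (hk i).1; rewrite /canon_dual -/S -/Si => e.
  by rewrite ipC e conjc_real.
move=> G hG [[_ _] hGe].
apply: funext => i.
have [n0|n0] := posnP n.
  by move: (G i) (canon_dual F i); rewrite n0 => x y; rewrite !flatmx0.
by rewrite (hkey n0 G hG hGe i).2 (hkey n0 _ hdc heq i).2.
Qed.
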